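(* Let $X$ and $Y$ be finite $T_0$-spaces. If $X$ is simple homotopy equivalent to $Y$, then $\overline{\mathrm{rank}}(X)=\overline{\mathrm{rank}}(Y)$, where $\overline{\mathrm{rank}}(X):=|X|-\mathrm{rank}(X_M)$.
   Context: A finite $T_0$-space is identified with a finite poset via $x\le y$ iff $U_x\subseteq U_y$, where $U_x$ is the minimal open set containing $x$. For a labelling $X=\{x_1,\dots,x_n\}$, $X_M=(x_{i,j})$ is the $n\times n$ matrix with $x_{i,j}=0$ if $x_i\le x_j$ and $x_{i,j}=1$ otherwise. A point $x$ is a weak beat point if $\{y:y<x\}$ is contractible or $\{y:y>x\}$ is contractible. Two finite $T_0$-spaces are simple homotopy equivalent if one can be obtained from the other (up to homeomorphism) by a finite sequence of adding and removing weak beat points one at a time. *)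

(* Defs.v *)
From HB Require Import structures.
From mathcomp Require Import all_boot all_order all_algebra.
From Stdlib Require Import Relation_Operators.
Set Implicit Arguments. Unset Strict Implicit. Unset Printing Implicit Defensive.

(* A finite T0-space, seen as a finite poset: [fle x y] means U_x ⊆ U_y. *)
Record finT0 := FinT0 {
  fcar :> finType;
  fle : rel fcar;
  fle_refl : reflexive fle;
  fle_anti : antisymmetric fle;
  fle_trans : transitive fle }.

Definition flt (X : finT0) (x y : X) := fle x y && (x != y).

(* Subspace of X on the subset A (the induced order = subspace topology). *)
Section Sub.
Variables (X : finT0) (A : {set X}).
Definition sub_car : finType := {x : X | x \in A}.
Definition sub_le : rel sub_car := fun a b => fle (val a) (val b).
Lemma sub_le_refl : reflexive sub_le.
Proof. by move=> a; exact: fle_refl. Qed.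
Lemma sub_le_anti : antisymmetric sub_le.
Proof. by move=> a b H; apply: val_inj; exact: fle_anti. Qed.
Lemma sub_le_trans : transitive sub_le.
Proof. by move=> a b c; exact: fle_trans. Qed.
Definition subspace : finT0 := FinT0 sub_le_refl sub_le_anti sub_le_trans.
End Sub.

(* Continuous maps between finite T0-spaces = order-preserving maps. *)
Definition fmono (X Y : finT0) (f : X -> Y) := forall x y, fle x y -> fle (f x) (f y).

Definition fun_le (X Y : finT0) (f g : X -> Y) := forall x, fle (f x) (g x).

(* Homotopy of maps of finite T0-spaces: a fence of continuous maps
   f = h 0 <= or >= h 1 <= or >= ... h n = g. *)
Definition fhomotopic (X Y : finT0) (f g : X -> Y) :=
  exists (n : nat) (h : nat -> X -> Y),
    h 0 =1 f /\ h n =1 g /\ (forall i, i <= n -> fmono (h i)) /\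
    (forall i, i < n -> fun_le (h i) (h i.+1) \/ fun_le (h i.+1) (h i)).

Definition contractible (X : finT0) :=
  exists x0 : X, fhomotopic (fun x : X => x) (fun _ => x0).

Definition down_strict (X : finT0) (x : X) : finT0 := subspace [set y | flt y x].
Definition up_strict (X : finT0) (x : X) : finT0 := subspace [set y | flt x y].

Definition weak_beat_point (X : finT0) (x : X) :=
  contractible (down_strict x) \/ contractible (up_strict x).

Definition remove_pt (X : finT0) (x : X) : finT0 := subspace [set~ x].

(* Homeomorphism of finite T0-spaces = order isomorphism. *)
Definition homeomorphic (X Y : finT0) :=
  exists f : X -> Y, bijective f /\ forall x y, fle (f x) (f y) = fle x y.

Definition weak_move (X Y : finT0) :=
  (exists x : X, weak_beat_point x /\ homeomorphic (remove_pt x) Y) \/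
  (exists y : Y, weak_beat_point y /\ homeomorphic (remove_pt y) X).

Definition simple_homotopy_equivalent : finT0 -> finT0 -> Prop :=
  clos_refl_trans finT0 (fun X Y => homeomorphic X Y \/ weak_move X Y).

(* X_M for the labelling given by enum X: x_{ij} = 0 if x_i <= x_j, else 1.
   Rank taken over the rationals (= rank over R, as entries are 0/1). *)
Definition XM (X : finT0) : 'M[rat]_#|X| :=
  \matrix_(i, j) (if fle (enum_val i) (enum_val j) then 0 else 1)%R.

Definition rank_bar (X : finT0) : nat := #|X| - \rank (XM X).

(* Main.v *)
Require Import Defs.
From mathcomp Require Import all_boot all_order all_algebra.
From mathcomp Require Import lra zify.
From Stdlib Require Import Relation_Operators.
Set Implicit Arguments. Unset Strict Implicit. Unset Printing Implicit Defensive.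
Import GRing.Theory.
Local Open Scope ring_scope.

Definition chainb (X : finT0) (c : {set X}) :=
  [forall a, forall b, (a \in c) ==> (b \in c) ==> fle a b || fle b a].

Lemma chainP (X : finT0) (c : {set X}) :
  reflect (forall a b, a \in c -> b \in c -> fle a b || fle b a) (chainb c).
Proof.
apply: (iffP forallP) => [H a b ha hb | H a].
  by move: (H a) => /forallP /(_ b); rewrite ha hb.
by apply/forallP => b; apply/implyP => ha; apply/implyP => hb; apply: H.
Qed.

Definition ES (X : finT0) (A : {set X}) : rat :=
  (\sum_(c : {set X} | (c \subset A) && chainb c) (-1) ^+ #|c|)%R.
Definition EE (X : finT0) := ES [set: X].

Lemma E_emb (X Y : finT0) (f : X -> Y) (finj : injective f)
  (fle_f : forall a b, fle (f a) (f b) = fle a b) :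
  EE X = ES (f @: setT).
Proof.
rewrite /EE /ES (reindex_onto (fun c : {set X} => f @: c) (fun d => f @^-1: d)).
  apply: eq_big => [c|c _]; last by rewrite card_imset.
  have -> : f @^-1: (f @: c) = c.
    by apply/setP => x; rewrite inE mem_imset.
  rewrite eqxx andbT subsetT imsetS ?subsetT //=.
  apply/chainP/chainP => H a b.
    by move=> /imsetP [a' ha' ->] /imsetP [b' hb' ->]; rewrite !fle_f; apply: H.
  by move=> ha hb; rewrite -(fle_f a b) -(fle_f b a); apply: H; rewrite mem_imset.
move=> d /andP [sd _]; apply/setP => y; apply/imsetP/idP.
  by move=> [x]; rewrite inE => hx ->.
move=> hy; move/subsetP: sd => /(_ y hy) /imsetP [x _ ex].
by exists x => //; rewrite inE -ex.
Qed.

Lemma chain_sub (X : finT0) (c c' : {set X}) : c' \subset c -> chainb c -> chainb c'.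
Proof.
move=> /subsetP s /chainP H; apply/chainP => a b ha hb; apply: H; exact: s.
Qed.

Lemma chain_add (X : finT0) (A : {set X}) (y : X) (c : {set X}) :
  (forall z, z \in A -> fle y z || fle z y) -> c \subset A ->
  chainb (y |: c) = chainb c.
Proof.
move=> hc /subsetP cA; apply/idP/idP; first by apply: chain_sub; exact: subsetUr.
move=> /chainP H; apply/chainP => a b; rewrite !inE.
case/orP => [/eqP -> | ha]; case/orP => [/eqP -> | hb].
- by rewrite fle_refl.
- by apply: hc; exact: cA.
- by rewrite orbC; apply: hc; exact: cA.
- exact: H.
Qed.

Lemma cone (X : finT0) (A : {set X}) (y : X) :
  y \in A -> (forall z, z \in A -> fle y z || fle z y) -> ES A = 0.
Proof.
move=> hy hc.
pose t (c : {set X}) := if y \in c then c :\ y else y |: c.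
have tK : involutive t.
  move=> c; rewrite {2}/t; case: ifP => yc.
    by rewrite /t !inE eqxx /= setD1K.
  by rewrite /t !inE eqxx /= setU1K ?yc.
have key : forall c, ((t c \subset A) && chainb (t c) = (c \subset A) && chainb c)
    /\ (-1) ^+ #|t c| = - (-1) ^+ #|c| :> rat.
  move=> c; set d := c :\ y.
  have yd : y \notin d by rewrite !inE eqxx.
  have Pd : (y |: d \subset A) && chainb (y |: d) = (d \subset A) && chainb d.
    rewrite subUset sub1set hy /=.
    case dA: (d \subset A) => //=; exact: chain_add dA.
  have Fd : (-1) ^+ #|y |: d| = - (-1) ^+ #|d| :> rat.
    by rewrite cardsU1 yd exprS mulN1r.
  rewrite /t; case: ifP => yc.
    have -> : c = y |: d by rewrite /d setD1K.
    by rewrite setU1K // Pd Fd opprK; split.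
  have -> : c = d by apply/setP => z; rewrite /d !inE; case: eqP => // ->; rewrite yc.
  by rewrite Pd Fd; split.
have E1 : ES A = - ES A.
  rewrite {1}/ES (reindex_inj (can_inj tK)) /ES -sumrN.
  apply: eq_big => c; first by case: (key c).
  by case: (key c).
lra.
Qed.

Lemma E_split (X : finT0) (x : X) :
  EE X = ES [set~ x] - ES [set y | flt y x] * ES [set y | flt x y].
Proof.
set D := [set y | flt y x]; set U := [set y | flt x y].
have xD : x \notin D by rewrite !inE /flt eqxx andbF.
have xU : x \notin U by rewrite !inE /flt eqxx andbF.
have DU : forall z, z \in D -> z \in U -> False.
  move=> z; rewrite !inE /flt => /andP [h1 h2] /andP [h3 _].
  by move: h2; rewrite (@fle_anti X z x) ?h1 ?h3 ?eqxx.
rewrite /EE /ES (bigID (fun c : {set X} => x \in c)) /= addrC; congr (_ + _).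
  apply: eq_bigl => c; rewrite subsetT /= andbC; congr (_ && _).
  by rewrite subsetC sub1set !inE.
rewrite big_distrlr pair_big /= -sumrN.
rewrite (reindex_onto (fun p : {set X} * {set X} => x |: (p.1 :|: p.2))
  (fun c => (c :&: D, c :&: U))).
  have cap1 : forall c1 c2 : {set X}, c1 \subset D -> c2 \subset U ->
      (x |: (c1 :|: c2)) :&: D = c1.
    move=> c1 c2 /subsetP s1 /subsetP s2; apply/setP => z; rewrite in_setI in_setU1 in_setU.
    case: (boolP (z \in c1)) => zc1; first by rewrite orbT /= (s1 _ zc1).
    rewrite ?orbF /= andbC; case: (boolP (z \in D)) => zD //=.
    apply/negP => /orP [/eqP e | zc2]; first by move: xD; rewrite -e zD.
    by apply: (DU z zD); apply: s2.
  have cap2 : forall c1 c2 : {set X}, c1 \subset D -> c2 \subset U ->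
      (x |: (c1 :|: c2)) :&: U = c2.
    move=> c1 c2 /subsetP s1 /subsetP s2; apply/setP => z; rewrite in_setI in_setU1 in_setU.
    case: (boolP (z \in c2)) => zc2; first by rewrite !orbT /= (s2 _ zc2).
    rewrite ?orbF /= andbC; case: (boolP (z \in U)) => zU //=.
    apply/negP => /orP [/eqP e | zc1]; first by move: xU; rewrite -e zU.
    by apply: (DU z _ zU); apply: s1.
  apply: eq_big => [[c1 c2] | [c1 c2]] /=.
    apply/idP/idP.
      case/andP => [/andP [/andP [_ ch] _] /eqP [e1 e2]].
      have s1 : c1 \subset D by rewrite -e1 subsetIr.
      have s2 : c2 \subset U by rewrite -e2 subsetIr.
      have h1 := chain_sub (subsetIl _ D) ch; have h2 := chain_sub (subsetIl _ U) ch.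
      rewrite e1 in h1; rewrite e2 in h2.
      by rewrite s1 s2 h1 h2.
    case/and3P => [/andP [s1 ch1] s2 ch2].
    rewrite subsetT setU11 cap1 // cap2 // eqxx andbT /=.
    move/subsetP: s1 => s1; move/subsetP: s2 => s2.
    have l1 : forall a, a \in c1 -> fle a x.
      by move=> a /s1; rewrite inE /flt => /andP [].
    have l2 : forall a, a \in c2 -> fle x a.
      by move=> a /s2; rewrite inE /flt => /andP [].
    move/chainP: ch1 => ch1; move/chainP: ch2 => ch2.
    rewrite andbT; apply/chainP => a b; rewrite !inE.
    case/orP => [/eqP -> | /orP [ha | ha]]; case/orP => [/eqP -> | /orP [hb | hb]].
    - by rewrite fle_refl.
    - by rewrite l1 ?orbT.
    - by rewrite l2.
    - by rewrite l1.
    - exact: ch1.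
    - by rewrite (fle_trans (l1 _ ha) (l2 _ hb)).
    - by rewrite l2 ?orbT.
    - by rewrite (fle_trans (l1 _ hb) (l2 _ ha)) orbT.
    - exact: ch2.
  case/andP => [_ /eqP [e1 e2]].
  have s1 : c1 \subset D by rewrite -e1 subsetIr.
  have s2 : c2 \subset U by rewrite -e2 subsetIr.
  have xc : x \notin c1 :|: c2.
    rewrite inE negb_or; apply/andP; split.
      by apply/negP => /(subsetP s1); rewrite (negbTE xD).
    by apply/negP => /(subsetP s2); rewrite (negbTE xU).
  have c12 : c1 :&: c2 = set0.
    apply/setP => z; rewrite !inE; apply/negP => /andP [z1 z2].
    by apply: (DU z); [apply: (subsetP s1) | apply: (subsetP s2)].
  have := cardsUI c1 c2; rewrite c12 cards0 addn0 => e.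
  by rewrite cardsU1 xc e exprS exprD mulN1r.
move=> c /andP [/andP [_ ch] xc]; apply/setP => z; rewrite !inE.
case: eqP => [-> // | zx /=].
rewrite -andb_orr andb_idr //.
move=> zc; move/chainP: ch => /(_ z x zc xc); rewrite /flt.
have zx' : z != x by apply/eqP.
have xz' : x != z by rewrite eq_sym.
by case/orP => ->; rewrite zx' xz' ?orbT.
Qed.

Lemma noBeat (T : finType) (R : rel T) (Ra : antisymmetric R) (Rt : transitive R)
  (g : T -> T) (gm : forall a b, R a b -> R (g a) (g b)) (gle : forall a, R (g a) a)
  (nob : forall a b, b != a -> R b a -> (forall z, z != a -> R z a -> R z b) -> False) :
  forall a, g a = a.
Proof.
have step : forall a, (forall z, z != a -> R z a -> g z = z) -> g a = a.
  move=> a H; case: (eqVneq (g a) a) => // ne; exfalso.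
  apply: (nob a (g a) ne (gle a)) => z zn zR.
  rewrite -(H z zn zR); exact: gm.
suff H : forall k a, (#|[set z | (z != a) && R z a]| <= k)%N -> g a = a.
  by move=> a; exact: (H _ a (leqnn _)).
elim=> [|k IH] a hk; apply: step => z zn zR.
  move: hk; rewrite leqn0 => /eqP /cards0_eq /setP /(_ z).
  by rewrite !inE zn zR.
apply: IH; rewrite -ltnS; apply: leq_trans hk; apply: proper_card.
apply/properP; split; last by exists z; rewrite !inE ?zn ?zR ?eqxx.
apply/subsetP => w; rewrite !inE => /andP [wn wR].
rewrite (Rt _ _ _ wR zR) andbT; apply/eqP => e; subst w.
by move: zn; rewrite (Ra z a) ?eqxx // zR wR.
Qed.

Definition nobD (P : finT0) :=
  forall a b : P, b != a -> fle b a -> (forall z, z != a -> fle z a -> fle z b) -> False.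
Definition nobU (P : finT0) :=
  forall a b : P, b != a -> fle a b -> (forall z, z != a -> fle a z -> fle b z) -> False.

Lemma fence_id (P : finT0) (hD : nobD P) (hU : nobU P) n (h : nat -> P -> P) :
  h 0 =1 id -> (forall i, (i <= n)%N -> fmono (h i)) ->
  (forall i, (i < n)%N -> fun_le (h i) (h i.+1) \/ fun_le (h i.+1) (h i)) ->
  forall i, (i <= n)%N -> h i =1 id.
Proof.
move=> h0 hm hadj; elim=> [|i IH] hi //.
have IHi := IH (ltnW hi).
case: (hadj i hi) => hl.
  apply: (@noBeat P (fun a b => fle b a)).
  - by move=> a b /andP [h1 h2]; apply: fle_anti; rewrite h1 h2.
  - by move=> y x z h1 h2; exact: fle_trans h2 h1.
  - by move=> a b; exact: hm.
  - by move=> a; move: (hl a); rewrite IHi.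
  - by move=> a b ba ab H; apply: (hU a b ba ab H).
move=> x; apply: (@noBeat P (@fle P) _ _ (h i.+1)).
- exact: fle_anti.
- exact: fle_trans.
- by move=> a b; exact: hm.
- by move=> a; move: (hl a); rewrite IHi.
- exact: hD.
Qed.

Lemma contr_noBeat (P : finT0) : nobD P -> nobU P -> contractible P ->
  exists x0 : P, forall z, z = x0.
Proof.
move=> hD hU [x0 [n [h [h0 [hn [hm hadj]]]]]]; exists x0 => z.
have := fence_id hD hU h0 hm hadj (leqnn n) z; rewrite hn => /= <- //.
Qed.

Lemma retract_contr (P : finT0) (a b : P) (ba : b != a)
  (hz : forall z, z != a -> (fle z a -> fle z b) /\ (fle a z -> fle b z)) :
  contractible P -> contractible (remove_pt a).
Proof.
move=> [x0 [n [h [h0 [hn [hm hadj]]]]]].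
have bin : b \in [set~ a] by rewrite !inE.
pose y0 : remove_pt a := Sub b bin.
pose r (z : P) : remove_pt a := insubd y0 z.
have rv : forall z, val (r z) = if z == a then b else z.
  by move=> z; rewrite /r val_insubd !inE; case: (z == a).
have rm : forall z w, fle z w -> fle (val (r z)) (val (r w)).
  move=> z w zw; rewrite !rv.
  case: (eqVneq z a) => [ez | za]; case: (eqVneq w a) => [ew | wa].
  - exact: fle_refl.
  - by case: (hz w wa) => _; apply; rewrite -ez.
  - by case: (hz z za) => + _; apply; rewrite -ew.
  - exact: zw.
exists (r x0), n, (fun i (u : remove_pt a) => r (h i (val u))).
split; first by move=> u /=; rewrite h0 /r valKd.
split; first by move=> u /=; rewrite hn.
split.
  move=> i hi u v uv; apply: rm; apply: (hm i hi); exact: uv.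
move=> i hi; case: (hadj i hi) => hl; [left | right] => u; apply: rm; exact: hl.
Qed.

Lemma EE_sub (X : finT0) (A : {set X}) : EE (subspace A) = ES A.
Proof.
rewrite (@E_emb (subspace A) X val val_inj) //.
congr ES; apply/setP => x; apply/imsetP/idP.
  by move=> [u _ ->]; exact: (valP u).
by move=> xA; exists (Sub x xA : subspace A).
Qed.

Lemma card_sub (X : finT0) (A : {set X}) : #|subspace A| = #|A|.
Proof. by rewrite /= card_sig; apply: eq_card => x; rewrite !inE. Qed.

Lemma EE_setT (X : finT0) : EE X = ES [set: X].
Proof. by []. Qed.

Lemma contr_E n (P : finT0) : (#|P| <= n)%N -> contractible P -> EE P = 0.
Proof.
elim: n P => [|n IH] P hP hc.
  case: hc => x0 _; move: hP; rewrite leqn0 => /eqP /card0_eq /(_ x0).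
  by rewrite inE.
case: (boolP [exists a : P, exists b : P, (b != a) &&
   ((fle b a && [forall z, (z != a) && fle z a ==> fle z b]) ||
    (fle a b && [forall z, (z != a) && fle a z ==> fle b z]))]).
  case/existsP => a /existsP [b /andP [ba hab]].
  have hz : forall z, z != a -> (fle z a -> fle z b) /\ (fle a z -> fle b z).
    move=> z za; case/orP: hab => /andP [h1 /forallP h2]; split => hz.
    - by move: (h2 z); rewrite za hz.
    - exact: fle_trans h1 hz.
    - exact: fle_trans hz h1.
    - by move: (h2 z); rewrite za hz.
  have E0 : EE (remove_pt a) = 0.
    apply: IH; last exact: retract_contr ba hz hc.
    by rewrite card_sub cardsC1; move: hP; case: #|P|.
  rewrite (E_split a) -(EE_sub [set~ a]) E0 sub0r.
  have -> : ES [set y | flt y a] * ES [set y | flt a y] = 0; last by rewrite oppr0.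
  case/orP: hab => /andP [h1 /forallP h2].
    rewrite (@cone _ [set y | flt y a] b) ?mul0r // ?inE /flt ?h1 ?ba // => z; rewrite inE /flt.
    by case/andP => hz1 hz2; move: (h2 z); rewrite hz2 hz1 /= => ->; rewrite orbT.
  rewrite (@cone _ [set y | flt a y] b) ?mulr0 // ?inE /flt ?h1 1?eq_sym ?ba // => z; rewrite inE /flt.
  by case/andP => hz1 hz2; move: (h2 z); rewrite eq_sym hz2 hz1 /= => ->.
rewrite negb_exists => /forallP hn.
have hD : nobD P.
  move=> a b ba ab H; move: (hn a); rewrite negb_exists => /forallP /(_ b).
  rewrite ba ab /=; apply/negP/negPn/orP; left; apply/forallP => z.
  by apply/implyP => /andP [z1 z2]; apply: H.
have hU : nobU P.
  move=> a b ba ab H; move: (hn a); rewrite negb_exists => /forallP /(_ b).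
  rewrite ba ab /=; apply/negP/negPn/orP; right; apply/forallP => z.
  by apply/implyP => /andP [z1 z2]; apply: H.
case: (contr_noBeat hD hU hc) => x0 hx0.
rewrite EE_setT (@cone _ _ x0) ?inE // => z _; by rewrite (hx0 z) fle_refl.
Qed.

Lemma chain_max (X : finT0) (c : {set X}) : chainb c -> c != set0 ->
  exists2 m, m \in c & c \subset [set y | fle y m].
Proof.
move=> /chainP ch /set0Pn [i0 hi0].
case: (@arg_maxnP _ i0 (mem c) (fun i => #|[set z in c | fle z i]|) hi0) => m mc mmax.
exists m => //; apply/subsetP => z zc; rewrite inE.
case: (boolP (fle z m)) => // nzm.
have mz : fle m z by move: (ch z m zc mc); rewrite (negbTE nzm).
have := mmax z zc; apply: contraLR => _; rewrite -ltnNge; apply: proper_card.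
apply/properP; split.
  apply/subsetP => w; rewrite !inE => /andP [-> wm] /=; exact: fle_trans wm mz.
by exists z; rewrite !inE ?zc ?fle_refl // (negbTE nzm).
Qed.

Lemma inner_sum (X : finT0) (A : {set X}) (i : X) : i \in A ->
  \sum_(c : {set X} | ((c \subset A) && chainb c) && ((i \in c) && (c \subset [set y | fle y i])))
     (-1) ^+ #|c| = - ES ([set y | flt y i] :&: A).
Proof.
move=> iA.
rewrite (reindex_onto (fun c' : {set X} => i |: c') (fun c => c :\ i)); last first.
  by move=> c /andP [_ /andP [ic _]]; rewrite setD1K.
rewrite /ES -sumrN; apply: eq_big => c'.
  apply/idP/idP.
    case/andP => [/andP [/andP [sA ch] /andP [_ sI]] /eqP e].
    rewrite -e; apply/andP; split; last by apply: chain_sub ch; exact: subsetDl.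
    apply/subsetP => z; rewrite !inE => /andP [zi zc].
    have zc' : z \in i |: c' by rewrite !inE.
    rewrite (subsetP sA _ zc') andbT /flt zi andbT.
    by move: (subsetP sI _ zc'); rewrite inE.
  case/andP => [sc ch].
  have ic : i \notin c'.
    by apply/negP => /(subsetP sc); rewrite !inE /flt eqxx andbF.
  rewrite setU1K // eqxx andbT setU11 /=.
  rewrite subUset sub1set iA /=.
  have -> : c' \subset A.
    by apply: subset_trans sc _; exact: subsetIr.
  rewrite /= (@chain_add _ ([set y | flt y i] :&: A)) ?ch //=; last first.
    by move=> z; rewrite !inE /flt => /andP [/andP [-> _] _]; rewrite orbT.
  rewrite subUset sub1set inE fle_refl /=.
  apply/subsetP => z /(subsetP sc); rewrite !inE /flt => /andP [/andP [-> _] _] //.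
move=> /andP [_ /eqP e].
have ic : i \notin c' by rewrite -e !inE eqxx.
by rewrite cardsU1 ic exprS mulN1r.
Qed.

Lemma max_decomp (X : finT0) (A : {set X}) :
  ES A = 1 - \sum_(i in A) ES ([set y | flt y i] :&: A).
Proof.
have P0 : (set0 \subset A) && chainb (set0 : {set X}).
  by rewrite sub0set /=; apply/chainP => a b; rewrite inE.
have -> : \sum_(i in A) ES ([set y | flt y i] :&: A) =
  - \sum_(i in A) \sum_(c : {set X} | (c \subset A) && chainb c)
      (if (i \in c) && (c \subset [set y | fle y i]) then (-1) ^+ #|c| else 0).
  rewrite -sumrN; apply: eq_bigr => i iA; rewrite -big_mkcondr inner_sum // opprK //.
rewrite exchange_big /= opprK /ES (bigD1 set0) //= cards0 expr0; congr (_ + _).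
rewrite [RHS](bigD1 set0) //= [X in _ = X + _]big1 ?add0r; last first.
  by move=> i _; rewrite inE.
apply: eq_bigr => c /andP [/andP [cA ch] cn].
have [m mc cm] := chain_max ch cn.
rewrite (bigD1 m) ?(subsetP cA) //= mc cm /= big1 ?addr0 // => j /andP [jA jm].
case: ifP => // /andP [jc cj].
have e : m = j.
  apply: fle_anti; apply/andP; split.
    by move: (subsetP cj _ mc); rewrite inE.
  by move: (subsetP cm _ jc); rewrite inE.
by move: jm; rewrite e eqxx.
Qed.

Definition Zm (X : finT0) : 'M[rat]_#|X| :=
  \matrix_(i, j) (if fle (enum_val i) (enum_val j) then 1 else 0).

Lemma Zinj (X : finT0) (u : 'rV[rat]_#|X|) : u *m Zm X = 0 -> u = 0.
Proof.
move=> hu.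
have step : forall i : 'I_#|X|,
    (forall l : 'I_#|X|, flt (enum_val l) (enum_val i) -> u 0 l = 0) -> u 0 i = 0.
  move=> i H; have := congr1 (fun M : 'rV_#|X| => M 0 i) hu; rewrite !mxE.
  rewrite (bigD1 i) //= mxE fle_refl mulr1 big1 ?addr0 // => l li.
  rewrite mxE; case: ifP => hl; last by rewrite mulr0.
  rewrite H ?mul0r // /flt hl /=; apply/eqP => /enum_val_inj e.
  by move: li; rewrite e eqxx.
suff H : forall k (i : 'I_#|X|),
    (#|[set l : 'I_#|X| | flt (enum_val l) (enum_val i)]| <= k)%N -> u 0 i = 0.
  by apply/rowP => i; rewrite mxE; apply: (H _ i (leqnn _)).
elim=> [|k IH] i hk; apply: step => l hl.
  move: hk; rewrite leqn0 => /eqP /cards0_eq /setP /(_ l).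
  by rewrite !inE hl.
apply: IH; rewrite -ltnS; apply: leq_trans hk; apply: proper_card.
apply/properP; split; last by exists l; rewrite !inE ?hl /flt ?eqxx ?andbF.
apply/subsetP => w; rewrite !inE /flt => /andP [w1 w2].
move: hl; rewrite /flt => /andP [l1 l2].
rewrite (fle_trans w1 l1) /=; apply/eqP => e.
by move: w2; rewrite e (@fle_anti X (enum_val i) (enum_val l)) ?eqxx // l1 -e w1.
Qed.

Lemma rankZ (X : finT0) : \rank (Zm X) = #|X|.
Proof.
have K : kermx (Zm X) = 0.
  apply/row_matrixP => k; rewrite row0; apply: Zinj; apply/sub_kermxP; exact: row_sub.
have := mxrank_ker (Zm X); rewrite K mxrank0 => /esym /eqP; rewrite subn_eq0 => h.
by apply/eqP; rewrite eqn_leq h rank_leq_row.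
Qed.

Definition vv (X : finT0) : 'rV[rat]_#|X| :=
  \row_i ES [set y | flt y (enum_val i)].

Lemma sum_sd (X : finT0) :
  \sum_(x : X) ES [set y | flt y x] = 1 - EE X.
Proof.
rewrite /EE max_decomp opprB addrC subrK.
apply: eq_big => [x|x _]; first by rewrite inE.
by rewrite setIT.
Qed.

Lemma vZ (X : finT0) : vv X *m Zm X = const_mx 1.
Proof.
apply/rowP => j; rewrite !mxE.
set j' := enum_val j.
have -> : \sum_i vv X 0 i * Zm X i j =
    \sum_(x : X) ES [set y | flt y x] * (if fle x j' then 1 else 0).
  by rewrite [RHS]big_enum_val; apply: eq_bigr => i _; rewrite !mxE.
have -> : \sum_(x : X) ES [set y | flt y x] * (if fle x j' then 1 else 0) =
    \sum_(x | fle x j') ES [set y | flt y x].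
  by rewrite [RHS]big_mkcond; apply: eq_bigr => x _; case: ifP; rewrite ?mulr1 ?mulr0.
have := max_decomp [set y | fle y j'].
rewrite (@cone _ _ j') ?inE ?fle_refl //; last first.
  by move=> z; rewrite inE => ->; rewrite orbT.
move=> /eqP; rewrite eq_sym subr_eq0 => /eqP ->.
apply: eq_big => [x|x]; first by rewrite inE.
move=> xj; congr ES; apply/setP => y; rewrite !inE.
apply/idP/idP => [h|/andP [h _] //]; rewrite h /=.
move/andP: h => [yx _]; exact: fle_trans yx xj.
Qed.

Lemma vJ (X : finT0) : vv X *m (const_mx 1 : 'M_#|X|) = (1 - EE X) *: (const_mx 1 : 'rV_#|X|).
Proof.
apply/rowP => j; rewrite !mxE mulr1 -sum_sd [RHS]big_enum_val.
by apply: eq_bigr => i _; rewrite !mxE mulr1.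
Qed.

Lemma rank_bar_E (X : finT0) : rank_bar X = (EE X == 0).
Proof.
rewrite /rank_bar.
have hA : XM X = const_mx 1 - Zm X.
  by apply/matrixP => i j; rewrite !mxE; case: fle; rewrite ?subr0 ?subrr.
have hZ : Zm X = const_mx 1 + (- XM X) by rewrite hA opprB addrC subrK.
have vA : vv X *m XM X = (- EE X) *: (const_mx 1 : 'rV_#|X|).
  by rewrite hA mulmxBr vJ vZ scalerBl scale1r scaleNr addrAC subrr add0r.
have rZ := rankZ X.
have rA : (\rank (XM X) <= #|X|)%N := rank_leq_row _.
case: (eqVneq (EE X) 0) => hE.
  have n0 : (0 < #|X|)%N.
    case: (posnP #|X|) => // n0; exfalso.
    have := sum_sd X; rewrite big_pred0 => [|x]; last first.
      by have := card0_eq n0 x; rewrite !inE.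
    rewrite hE subr0 => /eqP; rewrite eq_sym oner_eq0.
    done.
  have vnz : vv X != 0.
    apply/eqP => v0; have := vZ X; rewrite v0 mul0mx => /rowP /(_ (Ordinal n0)).
    by rewrite !mxE => /eqP; rewrite eq_sym oner_eq0.
  have kv : (vv X <= kermx (XM X))%MS.
    by apply/sub_kermxP; rewrite vA hE oppr0 scale0r.
  have k1 : (1 <= \rank (kermx (XM X)))%N.
    by apply: leq_trans (mxrankS kv); rewrite rank_rV vnz.
  rewrite mxrank_ker in k1.
  have rJ : (\rank (const_mx 1%R : 'M[rat]_#|X|) <= 1)%N.
    apply: leq_trans (mxrankS _) (rank_leq_row (const_mx 1%R : 'rV[rat]_#|X|)).
    by apply/row_subP => i; rewrite row_const.
  have := mxrank_add (const_mx 1) (- XM X); rewrite -hZ rZ eqmx_opp => h.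
  have h2 := leq_trans h (leq_add rJ (leqnn _)). clear -h2 k1. suff : (#|X| - \rank (XM X) = 1)%N by move=> ->. lia.
have ones_sub : ((const_mx 1 : 'rV_#|X|) <= XM X)%MS.
  have -> : (const_mx 1 : 'rV_#|X|) = (- EE X)^-1 *: (vv X *m XM X).
    by rewrite vA scalerA mulVf ?scale1r // oppr_eq0.
  by rewrite scalemx_sub // submxMl.
have J_sub : ((const_mx 1 : 'M_#|X|) <= XM X)%MS.
  by apply/row_subP => i; rewrite row_const.
have Z_sub : (Zm X <= XM X)%MS.
  by rewrite hZ; apply: addmx_sub => //; rewrite eqmx_opp.
have := mxrankS Z_sub; rewrite rZ => h.
suff : (#|X| - \rank (XM X) = 0)%N by move=> ->. lia.
Qed.

Lemma EE_homeo (X Y : finT0) : homeomorphic X Y -> EE X = EE Y.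
Proof.
move=> [f [fb ff]]; rewrite (E_emb (bij_inj fb) ff) /EE; congr ES.
apply/setP => y; rewrite inE; apply/imsetP; case: fb => g _ gK.
by exists (g y); rewrite ?inE ?gK.
Qed.

Lemma EE_weak (X : finT0) (x : X) : weak_beat_point x -> EE X = EE (remove_pt x).
Proof.
rewrite (E_split x) /remove_pt EE_sub.
case=> hc; have := contr_E (leqnn _) hc.
  by rewrite /down_strict EE_sub => ->; rewrite mul0r subr0.
by rewrite /up_strict EE_sub => ->; rewrite mulr0 subr0.
Qed.

Lemma EE_she (X Y : finT0) : simple_homotopy_equivalent X Y -> EE X = EE Y.
Proof.
elim=> {X Y} [X Y [h | [[x [wx hx]] | [y [wy hy]]]] | X | X Y Z _ IH1 _ IH2] //.
- exact: EE_homeo.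
- by rewrite (EE_weak wx); exact: EE_homeo.
- by rewrite (EE_weak wy); symmetry; exact: EE_homeo.
- by rewrite IH1.
Qed.

Theorem mainTheorem9 (X Y : finT0) :
  simple_homotopy_equivalent X Y -> rank_bar X = rank_bar Y.
Proof. by move=> h; rewrite !rank_bar_E (EE_she h). Qed.
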